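(* If $G$ is a connected, claw-free, cubic graph, then \[ \sigma_{(2,3)}(G) \le \sigma_{(2,2)}(G) \le \sigma_{(2,3)}(G)+1. \] In addition, if $G\neq K_4$, then $u(G) \le \sigma_{(2,2)}(G) \le u(G)+1$, where $u(G)$ is the number of units of $G$.
   Context: A graph is claw-free if it has no induced subgraph isomorphic to $K_{1,3}$; it is cubic if every vertex has degree $3$. A diamond is an induced subgraph isomorphic to $K_4$ minus one edge. For a connected, claw-free, cubic graph $G\neq K_4$, the vertex set $V(G)$ can be uniquely partitioned into sets each of which induces a triangle or a diamond in $G$; the parts of this partition are called units, and $u(G)$ is the number of units. $(p,q)$-spreading: let $p\in\mathbb{N}$ and $q\in\mathbb{N}\cup\{\infty\}$. Start with a set $S\subseteq V(G)$ of blue vertices, all other vertices white. The color change rule: if a white vertex $w$ has at least $p$ blue neighbors, and at least one of the blue neighbors of $w$ has at most $q$ white neighbors, then $w$ is recolored blue. $S$ is a $(p,q)$-spreading set if repeatedly applying this rule eventually colors all vertices blue. $\sigma_{(p,q)}(G)$ is the minimum cardinality of a $(p,q)$-spreading set of $G$. *)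

(* Defs.v *)
From mathcomp Require Import all_boot all_order.
Set Implicit Arguments. Unset Strict Implicit. Unset Printing Implicit Defensive.

Section Graphs.
Variables (T : finType) (e : rel T).

Definition simple_graph : Prop := symmetric e /\ irreflexive e.

Definition nbhd (v : T) : {set T} := [set w | e v w].

Definition cubic : Prop := forall v, #|nbhd v| = 3.

Definition connected_graph : Prop := forall x y : T, connect e x y.

Definition claw_free : Prop :=
  forall v a b c : T, e v a -> e v b -> e v c ->
    a != b -> b != c -> a != c -> [|| e a b, e b c | e a c].

Definition is_K4 : Prop :=
  #|T| = 4 /\ forall x y : T, x != y -> e x y.

Definition induces_triangle (A : {set T}) : bool :=
  (#|A| == 3) && [forall x in A, forall y in A, (x != y) ==> e x y].

Definition induces_diamond (A : {set T}) : bool :=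
  (#|A| == 4) &&
  [exists x in A, exists y in A,
     [&& x != y, ~~ e x y &
      [forall a in A, forall b in A,
         ((a != b) && ([set a; b] != [set x; y])) ==> e a b]]].

Definition unit_partition (P : {set {set T}}) : bool :=
  partition P [set: T] &&
  [forall A in P, induces_triangle A || induces_diamond A].

(* u(G): number of units of the (unique) unit partition. *)
Definition num_units : nat :=
  match [pick P | unit_partition P] with
  | Some P => #|P|
  | None => 0
  end.

(* (p,q)-spreading, q finite (only q = 2, 3 are needed). *)
Definition spread_step (p q : nat) (B B' : {set T}) : bool :=
  [exists w, [&& w \notin B,
                 p <= #|nbhd w :&: B|,
                 [exists b in nbhd w :&: B, #|nbhd b :\: B| <= q] &
                 B' == w |: B]].

Definition spreading_set (p q : nat) (S : {set T}) : bool :=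
  connect (spread_step p q) S [set: T].

(* sigma_{(p,q)}(G): minimum size of a (p,q)-spreading set
   ([set: T] is always one, so the arg min is well defined). *)
Definition sigma (p q : nat) : nat :=
  #|[arg min_(S < [set: T] | spreading_set p q S) #|S|]|.

End Graphs.

(* Main.v *)
Require Import Defs.
From mathcomp Require Import all_boot all_order zify.
Set Implicit Arguments. Unset Strict Implicit. Unset Printing Implicit Defensive.

Lemma connect_inv (T : finType) (r : rel T) (I : pred T) x y :
  (forall a b, I a -> r a b -> I b) -> I x -> connect r x y -> I y.
Proof.
move=> H Ix /connectP [p pth ->]; elim: p x Ix pth => //= z p IH x Ix /andP [rxz pth].
exact: IH (H _ _ Ix rxz) pth.
Qed.

Lemma card3E (T : finType) (x y z : T) : x != y -> y != z -> x != z ->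
  #|[set x; y; z]| = 3.
Proof.
move=> xy yz xz; rewrite -!setUA !cardsU1 cards1 !inE negb_or xy xz yz.
done.
Qed.

Lemma card4E (T : finType) (x y z w : T) : x != y -> x != z -> x != w ->
  y != z -> y != w -> z != w -> #|[set x; y; z; w]| = 4.
Proof.
move=> xy xz xw yz yw zw; rewrite -!setUA !cardsU1 cards1 !inE !negb_or xy xz xw yz yw zw.
done.
Qed.

Lemma set_enum2 (T : finType) (A : {set T}) : #|A| = 2 ->
  exists x y, x != y /\ A = [set x; y].
Proof.
move=> cA; have := enum_uniq (pred_of_set A); have := cardE A; rewrite cA.
case E: (enum A) => [|x [|y [|]]] //= _; rewrite inE andbT => xy.
exists x, y; split => //; apply/setP => v; by rewrite -mem_enum E !inE ?orbA ?orbF.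
Qed.

Lemma set_enum3 (T : finType) (A : {set T}) : #|A| = 3 ->
  exists x y z, [/\ x != y, y != z, x != z & A = [set x; y; z]].
Proof.
move=> cA; have := enum_uniq (pred_of_set A); have := cardE A; rewrite cA.
case E: (enum A) => [|x [|y [|z [|]]]] //= _; rewrite !inE !negb_or andbT.
move=> /andP [/andP [xy xz] yz].
exists x, y, z; split => //; apply/setP => v; by rewrite -mem_enum E !inE ?orbA ?orbF.
Qed.

Lemma set_enum4 (T : finType) (A : {set T}) : #|A| = 4 ->
  exists x y z w, [/\ [&& x != y, x != z, x != w, y != z, y != w & z != w]
     & A = [set x; y; z; w]].
Proof.
move=> cA; have := enum_uniq (pred_of_set A); have := cardE A; rewrite cA.
case E: (enum A) => [|x [|y [|z [|w [|]]]]] //= _; rewrite !inE !negb_or andbT.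
case/and3P => /and3P [xy xz xw] /andP [yz yw] zw.
exists x, y, z, w; split; first by rewrite xy xz xw yz yw zw.
apply/setP => v; by rewrite -mem_enum E !inE ?orbA ?orbF.
Qed.

Section G.
Variables (T : finType) (e : rel T).
Hypotheses (sym : symmetric e) (irr : irreflexive e) (cub : cubic e).

Lemma adj_neq x y : e x y -> x != y.
Proof. by apply: contraTneq => ->; rewrite irr. Qed.

Lemma nb3 v p q r b : e v p -> e v q -> e v r -> p != q -> q != r -> p != r ->
  e v b -> [|| b == p, b == q | b == r].
Proof.
move=> vp vq vr pq qr pr vb.
have sub : [set p; q; r] \subset nbhd e v.
  by apply/subsetP => x; rewrite !inE => /orP [/orP [] | ] /eqP ->.
have /eqP E : [set p; q; r] == nbhd e v by rewrite eqEcard sub card3E // cub.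
have : b \in nbhd e v by rewrite inE.
by rewrite -E !inE orbA.
Qed.

Lemma third_nbr v y z : exists n, [&& e v n, n != y & n != z].
Proof.
case: (boolP [exists n, [&& e v n, n != y & n != z]]) => [/existsP // | /existsPn H].
exfalso.
have sub : nbhd e v \subset [set y; z].
  apply/subsetP => n; rewrite !inE => vn; move: (H n); rewrite vn /=.
  by rewrite negb_and !negbK.
have := subset_leq_card sub; rewrite cub cards2; by case: (y != z).
Qed.

Lemma three_nbrs v : exists a b c, [/\ [&& e v a, e v b & e v c],
  a != b, b != c & a != c].
Proof.
have [a [b [c [ab bc ac E]]]] := set_enum3 (cub v).
exists a, b, c; split => //.
have : [set a; b; c] \subset nbhd e v by rewrite E.
move/subsetP => H.
have F x : x \in [set a; b; c] -> e v x by move=> /H; rewrite inE.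
by rewrite !F // !inE eqxx ?orbT.
Qed.


Lemma two_blue w p q (B : {set T}) : p != q -> e w p -> e w q -> p \in B -> q \in B ->
  1 < #|nbhd e w :&: B|.
Proof.
move=> pq wp wq pB qB; apply/card_gt1P; exists p, q; by rewrite !inE wp wq pB qB.
Qed.

Lemma white_le2 b h (B : {set T}) : e b h -> h \in B -> #|nbhd e b :\: B| <= 2.
Proof.
move=> bh hB; rewrite cardsD cub.
have : 0 < #|nbhd e b :&: B| by apply/card_gt0P; exists h; rewrite !inE bh hB.
move=> H; lia.
Qed.

Definition step := spread_step e 2 2.

Definition R (S X : {set T}) := forall C : {set T}, S \subset C ->
  exists2 C' : {set T}, connect step C C' & C :|: X \subset C'.

Lemma R_sub (S X : {set T}) : X \subset S -> R S X.
Proof.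
move=> XS C SC; exists C => //; apply/subsetP => x; rewrite inE => /orP [] // /(subsetP XS).
exact: (subsetP SC).
Qed.

Lemma R_mono (S S' X : {set T}) : S \subset S' -> R S X -> R S' X.
Proof. move=> SS' H C S'C; apply: H; exact: subset_trans SS' S'C. Qed.

Lemma R_weak (S X X' : {set T}) : X' \subset X -> R S X -> R S X'.
Proof.
move=> XX H C SC; have [C' c1 c2] := H C SC; exists C' => //.
apply: subset_trans c2; exact: setUS.
Qed.

Lemma R_cat (S X Y : {set T}) : R S X -> R (S :|: X) Y -> R S (X :|: Y).
Proof.
move=> H1 H2 C SC; have [C' c1 c2] := H1 C SC.
have SXC' : S :|: X \subset C'.
  apply: subset_trans c2; exact: setSU.
have [C'' d1 d2] := H2 C' SXC'.
exists C''; first exact: connect_trans c1 d1.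
apply/subsetP => x; rewrite !inE => /or3P [xC | xX | xY]; apply: (subsetP d2); rewrite inE.
- by rewrite (subsetP c2) // inE xC.
- by rewrite (subsetP c2) // !inE xX orbT.
- by rewrite xY orbT.
Qed.

Lemma R_one (S : {set T}) w p q h : p != q -> e w p -> e w q -> p \in S -> q \in S ->
  e p h -> h \in S -> R S [set w].
Proof.
move=> pq wp wq pS qS ph hS C SC.
case: (boolP (w \in C)) => wC.
  exists C => //; apply/subsetP => x; rewrite !inE => /orP [] // /eqP -> //.
exists (w |: C); last first.
  apply/subsetP => x; rewrite !inE => /orP [] -> //; by rewrite orbT.
apply: connect1; apply/existsP; exists w; rewrite wC /=.
rewrite (two_blue pq wp wq (subsetP SC _ pS) (subsetP SC _ qS)) eqxx andbT /=.
apply/existsP; exists p; rewrite !inE wp (subsetP SC _ pS) /=.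
exact: white_le2 ph (subsetP SC _ hS).
Qed.

Lemma R_close (S X Y : {set T}) : R S X -> Y \subset S :|: X -> R S Y.
Proof.
move=> H YSX C SC; have [C' c1 c2] := H C SC; exists C' => //.
apply/subsetP => v; rewrite inE => /orP [vC | vY]; apply: (subsetP c2); rewrite inE ?vC //.
move/(subsetP YSX): vY; rewrite inE => /orP [vS | ->]; last by rewrite orbT.
by rewrite (subsetP SC).
Qed.

Lemma R_final (S : {set T}) : R S [set: T] -> spreading_set e 2 2 S.
Proof.
move=> H; have [C' c1 c2] := H S (subxx _).
have : C' = [set: T] by apply/eqP; rewrite eqEsubset subsetT; apply: subset_trans c2; exact: subsetUr.
by move=> E; rewrite /spreading_set -E.
Qed.

End G.

Ltac seteq := apply/setP => ?; rewrite !inE; repeat (case: eqP => _); done.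

Lemma pair_neq (T : finType) (p q x y : T) : q \notin [set x; y] -> [set p; q] != [set x; y].
Proof. by apply: contra => /eqP <-; rewrite !inE eqxx orbT. Qed.

Section U.
Variables (T : finType) (e : rel T).
Hypotheses (sym : symmetric e) (irr : irreflexive e) (cub : cubic e).

Definition unitb (A : {set T}) := induces_triangle e A || induces_diamond e A.

Lemma tri_rep A : induces_triangle e A -> exists x y z,
  [/\ A = [set x; y; z], x != y, y != z, x != z & [&& e x y, e y z & e x z]].
Proof.
case/andP => /eqP cA /forall_inP H.
have adj p q : p \in A -> q \in A -> p != q -> e p q.
  by move=> pA qA; move/forall_inP: (H p pA) => /(_ q qA) /implyP.
have [x [y [z [xy yz xz E]]]] := set_enum3 cA.
have xA : x \in A by rewrite E !inE eqxx.
have yA : y \in A by rewrite E !inE eqxx orbT.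
have zA : z \in A by rewrite E !inE eqxx orbT.
exists x, y, z; split => //; by rewrite !adj.
Qed.

Lemma tri_rep_at A w : induces_triangle e A -> w \in A -> exists y z,
  [/\ A = [set w; y; z], w != y, y != z, w != z & [&& e w y, e y z & e w z]].
Proof.
case/tri_rep => x [y [z [-> xy yz xz /and3P [exy eyz exz]]]].
rewrite !inE => /orP [/orP [] | ] /eqP ->.
- exists y, z; split => //; by rewrite exy eyz exz.
- exists x, z; split; first seteq.
  + by rewrite eq_sym.
  + done.
  + done.
  + by rewrite (sym y x) exy exz eyz.
- exists x, y; split; first seteq.
  + by rewrite eq_sym.
  + done.
  + by rewrite eq_sym.
  + by rewrite (sym z x) exz (sym z y) eyz exy.
Qed.

Lemma dia_rep A : induces_diamond e A -> exists a b c d,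
  [/\ A = [set a; b; c; d],
      [&& a != b, a != c, a != d, b != c, b != d & c != d],
      [&& e a b, e a d, e c b, e c d & e b d] & ~~ e a c].
Proof.
case/andP => /eqP cA /exists_inP [x xA /exists_inP [y yA /and3P [xy nxy /forall_inP H]]].
have adj p q : p \in A -> q \in A -> p != q -> [set p; q] != [set x; y] -> e p q.
  move=> pA qA pq pqxy; move/forall_inP: (H p pA) => /(_ q qA) /implyP; apply.
  by rewrite pq pqxy.
have sub : [set x; y] \subset A by apply/subsetP => v; rewrite !inE => /orP [] /eqP ->.
have c2 : #|A :\: [set x; y]| = 2.
  by rewrite cardsD (setIidPr sub) cA cards2 xy.
have [b [d [bd E]]] := set_enum2 c2.
have : b \in A :\: [set x; y] by rewrite E !inE eqxx.
rewrite inE => /andP [bxy bA].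
have : d \in A :\: [set x; y] by rewrite E !inE eqxx orbT.
rewrite inE => /andP [dxy dA].
move: (bxy) (dxy); rewrite !inE !negb_or => /andP [bx bz] /andP [dx dz].
have xb : x != b by rewrite eq_sym.
have xd : x != d by rewrite eq_sym.
have yb : y != b by rewrite eq_sym.
have yd : y != d by rewrite eq_sym.
exists x, b, y, d; split => //.
- apply/eqP; rewrite eq_sym eqEcard card4E // ?cA ?leqnn ?andbT //.
  by apply/subsetP => v; rewrite !inE => /orP [/orP [/orP [] | ] | ] /eqP ->.
- by rewrite xb xy xd bz bd yd.
- by rewrite !adj // ?pair_neq.
Qed.

Lemma unit_nbr2 U w : unitb U -> w \in U -> exists h1 h2,
  [/\ h1 != h2, h1 \in U, h2 \in U, e w h1 & e w h2].
Proof.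
case/orP => [Ht wU | Hd].
  have [y [z [E _ yz _ /and3P [wy _ wz]]]] := tri_rep_at Ht wU.
  by exists y, z; rewrite E !inE !eqxx ?orbT.
have [a [b [c [d [-> /and5P [ab ac ad bc /andP [bd cd]] /and5P [eab ead ecb ecd ebd] _]]]]] := dia_rep Hd.
rewrite !inE => /orP [/orP [/orP [] | ] | ] /eqP ->.
- by exists b, d; rewrite !inE !eqxx ?orbT.
- by exists a, c; rewrite !inE !eqxx ?orbT ac (sym b a) (sym b c).
- by exists b, d; rewrite !inE !eqxx ?orbT.
- by exists a, c; rewrite !inE !eqxx ?orbT ac (sym d a) (sym d c).
Qed.

Lemma unit_out U w : unitb U -> w \in U -> #|nbhd e w :\: U| <= 1.
Proof.
move=> uU wU; have [h1 [h2 [h12 h1U h2U wh1 wh2]]] := unit_nbr2 uU wU.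
have := two_blue h12 wh1 wh2 h1U h2U; rewrite cardsD cub; lia.
Qed.

End U.

Section L.
Variables (T : finType) (e : rel T).

Lemma sigma_le p q (S : {set T}) : spreading_set e p q S -> sigma e p q <= #|S|.
Proof.
move=> H; rewrite /sigma.
case: arg_minnP; first by rewrite /spreading_set connect0.
by move=> S0 _ /(_ S H).
Qed.

Lemma sigma_ex p q : exists2 S : {set T}, spreading_set e p q S & #|S| = sigma e p q.
Proof.
rewrite /sigma; case: arg_minnP; first by rewrite /spreading_set connect0.
by move=> S0 H _; exists S0.
Qed.

Lemma spread22_23 (S : {set T}) : spreading_set e 2 2 S -> spreading_set e 2 3 S.
Proof.
rewrite /spreading_set; apply: connect_sub => B B' st.
apply: connect1; case/existsP: st => w /and4P [a b /exists_inP [h hN hle] d].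
apply/existsP; exists w; rewrite a b d andbT /=.
by apply/exists_inP; exists h => //; apply: leq_trans hle _.
Qed.

Hypotheses (sym : symmetric e) (irr : irreflexive e) (cub : cubic e).

Lemma same_block (P : {set {set T}}) A B x : trivIset P -> A \in P -> B \in P ->
  x \in A -> x \in B -> A = B.
Proof.
by move=> tP AP BP xA xB; rewrite -(def_pblock tP AP xA) (def_pblock tP BP xB).
Qed.

Lemma lb (P : {set {set T}}) (S : {set T}) : unit_partition e P ->
  spreading_set e 2 3 S -> #|P| <= #|S|.
Proof.
case/andP => /and3P [/eqP cP tP nP] /forall_inP Hu sp.
have meet U : U \in P -> exists2 x, x \in S & x \in U.
  move=> UP; case: (boolP [exists x in S, x \in U]) => [/exists_inP // | /exists_inP H].
  exfalso.
  pose I := fun B : {set T} => [forall x in U, x \notin B].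
  have IS : I S.
    apply/forall_inP => x xU; apply/negP => xS; apply: H; by exists x.
  have inv : forall B B', I B -> spread_step e 2 3 B B' -> I B'.
    move=> B B' /forall_inP IB /existsP [w /and4P [wB two _ /eqP ->]].
    have wU : w \notin U.
      apply/negP => wU; have := unit_out sym cub (Hu _ UP) wU.
      have : nbhd e w :&: B \subset nbhd e w :\: U.
        apply/subsetP => v; rewrite !inE => /andP [-> vB]; rewrite andbT.
        by apply/negP => vU; move: (IB v vU); rewrite vB.
      move/subset_leq_card => le1 le2; move: two; lia.
    apply/forall_inP => x xU; rewrite !inE negb_or IB // andbT.
    by apply: contraNneq wU => <-.
  have := connect_inv inv IS sp; move/forall_inP.
  have /set0Pn [x xU] : U != set0 by apply: contraNneq nP => <-.
  by move=> /(_ x xU); rewrite inE.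
case: (posnP #|P|) => [-> // | /card_gt0P [U0 U0P]].
have [x0 _ x0U] := meet U0 U0P.
pose f U := odflt x0 [pick x in S :&: U].
have fP U : U \in P -> f U \in S :&: U.
  move=> UP; rewrite /f; case: pickP => [x -> // | H].
  by have [x xS xU] := meet U UP; move: (H x); rewrite inE xS xU.
have inj : {in P &, injective f}.
  move=> U V UP VP fUV; have := fP U UP; have := fP V VP; rewrite fUV !inE.
  by move=> /andP [_ h1] /andP [_ h2]; exact: same_block tP UP VP h2 h1.
rewrite -(card_in_imset inj); apply: subset_leq_card.
apply/subsetP => y /imsetP [U UP ->]; by have := fP U UP; rewrite inE => /andP [].
Qed.

End L.

Ltac subs := apply/subsetP => ?; rewrite !inE; repeat (case: eqP => _); done.

Section E.
Variables (T : finType) (e : rel T).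
Hypotheses (sym : symmetric e) (irr : irreflexive e) (cub : cubic e).

Notation R := (R e).

Lemma tri_step x y z w h (B : {set T}) : e x y -> e y z -> e x z -> e w x ->
  w \in B -> h \in B -> e w h -> y \in B -> w != y -> R B [set x; y; z].
Proof.
move=> xy yz xz wx wB hB wh yB wy.
have R1 : R B [set x].
  apply: (R_one cub (p := w) (q := y) (h := h)) => //; by rewrite sym.
have R2 : R (B :|: [set x]) [set z].
  apply: (R_one cub (p := x) (q := y) (h := y)); rewrite ?inE ?eqxx ?yB ?orbT //.
  - by apply: (adj_neq irr xy).
  - by rewrite sym.
  - by rewrite sym.
apply: R_close (R_cat R1 R2) _.
apply/subsetP => v; rewrite !inE => /orP [/orP [] | ] /eqP ->; by rewrite ?eqxx ?orbT ?yB.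
Qed.

Lemma dia_step a b c d w h (B : {set T}) :
  [&& e a b, e a d, e c b, e c d & e b d] -> e w a ->
  w \in B -> h \in B -> e w h -> b \in B -> w != b -> R B [set a; b; c; d].
Proof.
move=> /and5P [ab ad cb cd bd] wa wB hB wh bB wb.
have R1 : R B [set a].
  apply: (R_one cub (p := w) (q := b) (h := h)) => //; by rewrite sym.
have R2 : R (B :|: [set a]) [set d].
  apply: (R_one cub (p := a) (q := b) (h := b)); rewrite ?inE ?eqxx ?bB ?orbT //.
  - by apply: (adj_neq irr ab).
  - by rewrite sym.
  - by rewrite sym.
have R3 : R (B :|: ([set a] :|: [set d])) [set c].
  apply: (R_one cub (p := b) (q := d) (h := d)); rewrite ?inE ?eqxx ?bB ?orbT //.
  by apply: (adj_neq irr bd).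
apply: R_close (R_cat (R_cat R1 R2) R3) _.
apply/subsetP => v; rewrite !inE => /orP [/orP [/orP [] | ] | ] /eqP ->; by rewrite ?eqxx ?orbT ?bB.
Qed.

Lemma unit_root U : unitb e U -> exists p q, [/\ p \in U, q \in U & R [set p; q] U].
Proof.
case/orP => [Ht | Hd].
  have [x [y [z [-> xy yz xz /and3P [exy eyz exz]]]]] := tri_rep Ht.
  exists x, y; split; rewrite ?inE ?eqxx ?orbT //.
  have R1 : R [set x; y] [set z].
    apply: (R_one cub (p := x) (q := y) (h := y)); rewrite ?inE ?eqxx ?orbT // sym //.
  apply: R_close R1 _; subs.
have [a [b [c [d [-> /and5P [ab ac ad bc /andP [bd cd]] /and5P [eab ead ecb ecd ebd] _]]]]] := dia_rep Hd.
exists b, d; split; rewrite ?inE ?eqxx ?orbT //.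
have R1 : R [set b; d] [set a].
  by apply: (R_one cub (p := b) (q := d) (h := d)); rewrite ?inE ?eqxx ?orbT.
have R2 : R ([set b; d] :|: [set a]) [set c].
  by apply: (R_one cub (p := b) (q := d) (h := d)); rewrite ?inE ?eqxx ?orbT.
apply: R_close (R_cat R1 R2) _; subs.
Qed.

Lemma entry U u w : unitb e U -> u \in U -> w \notin U -> e w u ->
  exists2 s, s \in U & forall B : {set T}, w \in B -> (exists2 h, h \in B & e w h) ->
    s \in B -> R B U.
Proof.
move=> uU iuU wU wu; case/orP: uU => [Ht | Hd].
  have [y [z [E uy yz uz /and3P [euy eyz euz]]]] := tri_rep_at sym Ht iuU.
  exists y; first by rewrite E !inE eqxx orbT.
  move=> B wB [h hB wh] yB; rewrite E; apply: (tri_step euy eyz euz wu wB hB wh yB).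
  by apply: contraNneq wU => ->; rewrite E !inE eqxx orbT.
have [a [b [c [d [E /and5P [ab ac ad bc /andP [bd cd]] /and5P [eab ead ecb ecd ebd] _]]]]] := dia_rep Hd.
have inU v : [|| v == a, v == b, v == c | v == d] -> v \in U.
  by rewrite E !inE => /or4P [] ->; rewrite ?orbT.
have bU : b \in U by rewrite inU ?eqxx ?orbT.
have wb : w != b by apply: contraNneq wU => ->.
have : (u == a) || (u == b) || (u == c) || (u == d) by move: iuU; rewrite E !inE.
move=> /orP [/orP [/orP [] | ] | ] /eqP Eu; rewrite {u iuU}Eu in wu.
- exists b => // B wB [h hB wh] bB; rewrite E.
  by apply: (dia_step _ wu wB hB wh bB wb); rewrite eab ead ecb ecd ebd.
- exfalso; move: wU; rewrite inU //.
  have eba : e b a by rewrite sym.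
  have ebc : e b c by rewrite sym.
  have ebw : e b w by rewrite sym.
  have := nb3 cub eba ebc ebd ac cd ad ebw.
  by case/or3P => ->; rewrite ?orbT.
- exists b => // B wB [h hB wh] bB.
  rewrite E; apply: R_weak (dia_step (a := c) (b := b) (c := a) (d := d) _ wu wB hB wh bB wb); first by subs.
  by rewrite eab ead ecb ecd ebd.
- exfalso; move: wU; rewrite inU //.
  have eda : e d a by rewrite sym.
  have edb : e d b by rewrite sym.
  have edc : e d c by rewrite sym.
  have edw : e d w by rewrite sym.
  have := nb3 cub eda edb edc ab bc ac edw.
  by case/or3P => ->; rewrite ?orbT.
Qed.

End E.

Lemma cross (T : finType) (e : rel T) (I : pred T) x y : I x -> ~~ I y -> connect e x y ->
  exists a b, [/\ I a, ~~ I b & e a b].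
Proof.
move=> Ix nIy cxy.
case: (boolP [exists a, exists b, [&& I a, ~~ I b & e a b]]).
  by move/existsP => [a /existsP [b /and3P [? ? ?]]]; exists a, b.
move/existsPn => H; exfalso.
have inv : forall a b, I a -> e a b -> I b.
  move=> a b Ia eab; move/existsPn: (H a) => /(_ b); rewrite Ia eab andbT /=.
  by rewrite negbK.
by move: nIy; rewrite (connect_inv inv Ix cxy).
Qed.

Lemma in_cover (T : finType) (Q : {set {set T}}) x :
  reflect (exists2 V, V \in Q & x \in V) (x \in cover Q).
Proof. exact: bigcupP. Qed.

Section F.
Variables (T : finType) (e : rel T).
Hypotheses (sym : symmetric e) (irr : irreflexive e) (cub : cubic e)
  (con : connected_graph e).

Lemma ub (P : {set {set T}}) : unit_partition e P ->
  exists2 S : {set T}, spreading_set e 2 2 S & #|S| <= #|P|.+1.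
Proof.
move=> uP; case/andP: (uP) => /and3P [/eqP cP tP nP] /forall_inP Hu.
case: (posnP #|P|) => [P0 | Ppos].
  exists set0; last by rewrite cards0.
  have E : [set: T] = set0.
    by rewrite -cP; move/eqP: P0; rewrite cards_eq0 => /eqP ->; rewrite /cover big_set0.
  by rewrite /spreading_set E connect0.
have neU U : U \in P -> exists x, x \in U.
  move=> UP; apply/set0Pn; by apply: contraNneq nP => <-.
have main : forall k, 0 < k <= #|P| -> exists Q : {set {set T}}, exists S : {set T},
    [/\ Q \subset P, #|Q| = k, #|S| <= k.+1 & R e S (cover Q)].
  elim => [// | k IH] /andP [_ kle].
  case: (posnP k) => [k0 | kpos].
    subst k; have [U0 U0P] := card_gt0P Ppos.
    have [p [q [pU qU Rpq]]] := unit_root sym cub (Hu _ U0P).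
    exists [set U0], [set p; q]; split.
    - by rewrite sub1set.
    - by rewrite cards1.
    - by rewrite cards2; case: (p != q).
    - by rewrite /cover big_set1.
  have kk : 0 < k <= #|P| by rewrite kpos ltnW.
  have [Q [S [QP cQ cS RS]]] := IH kk.
  have [y ny] : exists y, y \notin cover Q.
    case: (boolP [exists y, y \notin cover Q]) => [/existsP // | /existsPn H]; exfalso.
    have PQ : P \subset Q.
      apply/subsetP => U UP; have [x xU] := neU U UP.
      move: (H x); rewrite negbK => /in_cover [V VQ xV].
      by rewrite (same_block tP UP (subsetP QP _ VQ) xU xV).
    by move: (subset_leq_card PQ); rewrite cQ; lia.
  have [x xQ] : exists x, x \in cover Q.
    have : 0 < #|Q| by rewrite cQ.
    case/card_gt0P => V VQ; have [x xV] := neU V (subsetP QP _ VQ).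
    by exists x; apply/in_cover; exists V.
  have [w [u [wQ uQ ewu]]] := cross (I := mem (cover Q)) xQ ny (con x y).
  have uPc : u \in cover P by rewrite cP.
  set U := pblock P u.
  have UP : U \in P by apply: pblock_mem uPc.
  have uU : u \in U by rewrite mem_pblock uPc.
  have /in_cover [V VQ wV] : w \in cover Q := wQ.
  have VP := subsetP QP _ VQ.
  have wU : w \notin U.
    apply/negP => wU; have UV := same_block tP UP VP wU wV.
    move: uQ => /negP; apply; apply/in_cover; exists V => //; by rewrite -UV.
  have UQ : U \notin Q.
    by apply: contraNN uQ => UQ; apply/in_cover; exists U.
  have [s sU Hs] := entry sym irr cub (Hu _ UP) uU wU ewu.
  exists (U |: Q), (s |: S); split.
  - by rewrite subUset sub1set UP QP.
  - by rewrite cardsU1 UQ cQ.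
  - by rewrite cardsU1; apply: leq_trans (leq_add (leq_b1 _) cS) _.
  have RS' : R e (s |: S) (cover Q).
    by apply: R_mono RS; apply: subsetUr.
  have RU : R e ((s |: S) :|: cover Q) U.
    have wQ' : w \in cover Q := wQ.
    apply: Hs; rewrite ?inE ?wQ' ?eqxx ?orbT //.
    have [h1 [h2 [_ h1V _ wh1 _]]] := unit_nbr2 sym (Hu _ VP) wV.
    exists h1 => //; rewrite inE; apply/orP; right; apply/in_cover; by exists V.
  apply: R_weak (R_cat RS' RU).
  apply/subsetP => v /in_cover [W WUQ vW]; move: WUQ; rewrite !inE => /orP [/eqP EW | WQ].
    by rewrite EW in vW; rewrite vW orbT.
  by apply/orP; left; apply/in_cover; exists W.
have hP : 0 < #|P| <= #|P| by rewrite Ppos leqnn.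
have [Q [S [QP cQ cS RS]]] := main #|P| hP.
exists S => //; apply: R_final.
have QPe : Q = P by apply/eqP; rewrite eqEcard QP cQ leqnn.
by rewrite QPe cP in RS.
Qed.

End F.

Section X.
Variables (T : finType) (e : rel T).
Hypotheses (sym : symmetric e) (irr : irreflexive e) (cub : cubic e)
  (con : connected_graph e).

Lemma K4_of x y z t :
  [&& e x y, e x z, e x t, e y z, e y t & e z t] -> is_K4 e.
Proof.
case/and5P => exy exz ext eyz /andP [eyt ezt].
have eyx : e y x by rewrite sym. have ezx : e z x by rewrite sym.
have etx : e t x by rewrite sym. have ezy : e z y by rewrite sym.
have ety : e t y by rewrite sym. have etz : e t z by rewrite sym.
have xy := adj_neq irr exy. have xz := adj_neq irr exz. have xt := adj_neq irr ext.
have yz := adj_neq irr eyz. have yt := adj_neq irr eyt. have zt := adj_neq irr ezt.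
have yx := adj_neq irr eyx. have zx := adj_neq irr ezx. have tx := adj_neq irr etx.
have zy := adj_neq irr ezy. have ty := adj_neq irr ety. have tz := adj_neq irr etz.
pose K := [set x; y; z; t].
have inv : forall a b, a \in K -> e a b -> b \in K.
  move=> a b; rewrite !inE => /orP [/orP [/orP [] | ] | ] /eqP -> eab.
  - by have := nb3 cub exy exz ext yz zt yt eab; rewrite -!orbA => /or3P [] ->; rewrite ?orbT.
  - by have := nb3 cub eyx eyz eyt xz zt xt eab; rewrite -!orbA => /or3P [] ->; rewrite ?orbT.
  - by have := nb3 cub ezx ezy ezt xy yt xt eab; rewrite -!orbA => /or3P [] ->; rewrite ?orbT.
  - by have := nb3 cub etx ety etz xy yz xz eab; rewrite -!orbA => /or3P [] ->; rewrite ?orbT.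
have allK v : v \in K.
  apply: (connect_inv (I := mem K) inv _ (con x v)); by rewrite /= !inE eqxx.
split.
  rewrite -cardsT -(card4E xy xz xt yz yt zt); apply: eq_card => v; by rewrite allK inE.
move=> p q pq; have := allK p; have := allK q.
rewrite !inE => /orP [/orP [/orP [] | ] | ] /eqP Eq /orP [/orP [/orP [] | ] | ] /eqP Ep;
  rewrite Ep Eq in pq *; first [ by rewrite eqxx in pq | done ].
Qed.

Lemma mk_triangle x y z : e x y -> e y z -> e x z -> induces_triangle e [set x; y; z].
Proof.
move=> exy eyz exz.
have eyx : e y x by rewrite sym. have ezx : e z x by rewrite sym. have ezy : e z y by rewrite sym.
rewrite /induces_triangle card3E ?(adj_neq irr exy) ?(adj_neq irr eyz) ?(adj_neq irr exz) //=.
apply/forall_inP => p; rewrite !inE => /orP [/orP [] | ] /eqP ->;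
apply/forall_inP => q; rewrite !inE => /orP [/orP [] | ] /eqP ->;
apply/implyP; rewrite ?eqxx //.
Qed.

Lemma mk_diamond a b c d :
  [&& a != b, a != c, a != d, b != c, b != d & c != d] ->
  [&& e a b, e a d, e c b, e c d & e b d] -> ~~ e a c ->
  induces_diamond e [set a; b; c; d].
Proof.
move=> /and5P [ab ac ad bc /andP [bd cd]] /and5P [eab ead ecb ecd ebd] nac.
have eba : e b a by rewrite sym. have eda : e d a by rewrite sym.
have ebc : e b c by rewrite sym. have edc : e d c by rewrite sym.
have edb : e d b by rewrite sym.
rewrite /induces_diamond card4E //=.
apply/exists_inP; exists a; first by rewrite !inE eqxx.
apply/exists_inP; exists c; first by rewrite !inE eqxx ?orbT.
rewrite ac nac /=.
apply/forall_inP => p; rewrite !inE => /orP [/orP [/orP [] | ] | ] /eqP ->;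
apply/forall_inP => q; rewrite !inE => /orP [/orP [/orP [] | ] | ] /eqP ->;
apply/implyP; rewrite ?eqxx //= ?andbF //.
by rewrite setUC eqxx andbF.
Qed.

End X.

Section H.
Variables (T : finType) (e : rel T).
Hypotheses (sym : symmetric e) (irr : irreflexive e) (cub : cubic e)
  (con : connected_graph e) (cf : claw_free e) (nK4 : ~ is_K4 e).

Lemma in_tri v : exists A, induces_triangle e A && (v \in A).
Proof.
have [a [b [c [/and3P [va vb vc] ab bc ac]]]] := three_nbrs cub v.
case/or3P: (cf va vb vc ab bc ac) => H.
- exists [set v; a; b]; rewrite mk_triangle // ?inE ?eqxx //.
- exists [set v; b; c]; rewrite mk_triangle // ?inE ?eqxx //.
- exists [set v; a; c]; rewrite mk_triangle // ?inE ?eqxx //.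
Qed.

Lemma dia_closed D x y z : induces_diamond e D -> x \in D -> e x y -> e x z -> e y z ->
  y \in D.
Proof.
move=> HD; have [a [b [c [d [E /and5P [ab ac ad bc /andP [bd cd]] /and5P [eab ead ecb ecd ebd] _]]]]] := dia_rep HD.
have inD v : (v == a) || (v == b) || (v == c) || (v == d) -> v \in D by rewrite E !inE.
have eba : e b a by rewrite sym. have ebc : e b c by rewrite sym.
have eda : e d a by rewrite sym. have edb : e d b by rewrite sym. have edc : e d c by rewrite sym.
have Nb v : e b v -> v \in D.
  move=> bv; have := nb3 cub eba ebc ebd ac cd ad bv.
  move=> H; apply: inD; by case/or3P: H => ->; rewrite ?orbT.
have Nd v : e d v -> v \in D.
  move=> dv; have := nb3 cub eda edb edc ab bc ac dv.
  move=> H; apply: inD; by case/or3P: H => ->; rewrite ?orbT.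
have att x' : e x' b -> e x' d -> e x' y -> e x' z -> e y z -> y \in D.
  move=> h1 h2 h3 h4 h5; case: (boolP (y \in D)) => // yD.
  have yb : b != y by apply: contraNneq yD => <-; apply: inD; rewrite eqxx ?orbT.
  have dy : d != y by apply: contraNneq yD => <-; apply: inD; rewrite eqxx ?orbT.
  have := nb3 cub h1 h2 h3 bd dy yb h4; case/or3P => /eqP Ez.
  - have : y \in D by apply: Nb; rewrite -Ez sym.
    by rewrite (negbTE yD).
  - have : y \in D by apply: Nd; rewrite -Ez sym.
    by rewrite (negbTE yD).
  - by move: h5; rewrite Ez irr.
move=> xD; have : (x == a) || (x == b) || (x == c) || (x == d) by move: xD; rewrite E !inE.
move=> /orP [/orP [/orP [] | ] | ] /eqP -> xy xz yz.
- exact: att eab ead xy xz yz.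
- exact: Nb.
- exact: att ecb ecd xy xz yz.
- exact: Nd.
Qed.

Lemma tri_in_dia A D x : induces_triangle e A -> induces_diamond e D -> x \in A -> x \in D ->
  A \subset D.
Proof.
move=> HA HD xA xD; have [y [z [-> _ _ _ /and3P [xy yz xz]]]] := tri_rep_at sym HA xA.
have yD := dia_closed HD xD xy xz yz.
have ezy : e z y by rewrite sym.
have zD := dia_closed HD xD xz xy ezy.
by apply/subsetP => v; rewrite !inE => /orP [/orP [] | ] /eqP ->.
Qed.

Lemma dia_eq D1 D2 w : induces_diamond e D1 -> induces_diamond e D2 -> w \in D1 -> w \in D2 ->
  D1 = D2.
Proof.
move=> H1 H2 w1 w2.
have [a [b [c [d [E /and5P [ab ac ad bc /andP [bd cd]] /and5P [eab ead ecb ecd ebd] _]]]]] := dia_rep H2.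
have eba : e b a by rewrite sym. have ebc : e b c by rewrite sym.
have eda : e d a by rewrite sym. have edb : e d b by rewrite sym. have edc : e d c by rewrite sym.
have cl := dia_closed H1.
have [bD dD] : b \in D1 /\ d \in D1.
  move: w2; rewrite E !inE => /orP [/orP [/orP [] | ] | ] /eqP Ew; rewrite Ew in w1.
  - by split; [apply: cl w1 eab ead ebd | apply: cl w1 ead eab edb].
  - by split => //; apply: cl w1 ebd eba eda.
  - by split; [apply: cl w1 ecb ecd ebd | apply: cl w1 ecd ecb edb].
  - by split => //; apply: cl w1 edb eda eba.
have aD := cl _ _ _ bD eba ebd ead.
have cD := cl _ _ _ bD ebc ebd ecd.
apply/eqP; rewrite eq_sym eqEcard.
move: H1 H2 => /andP [/eqP -> _] /andP [/eqP -> _]; rewrite leqnn andbT E.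
by apply/subsetP => v; rewrite !inE => /orP [/orP [/orP [] | ] | ] /eqP ->.
Qed.

Lemma dia_ext w y z n : e w y -> e y z -> e w z -> e w n -> e y n -> n != z ->
  exists D, induces_diamond e D && ([set w; y; z] \subset D).
Proof.
move=> ewy eyz ewz ewn eyn nz.
have nzn : ~~ e z n.
  apply/negP => ezn; apply: nK4; apply: (K4_of sym irr cub con (x := w) (y := y) (z := z) (t := n)).
  by rewrite ewy ewz ewn eyz eyn ezn.
have ezw : e z w by rewrite sym.
have ezy : e z y by rewrite sym.
have enw : e n w by rewrite sym.
have eny : e n y by rewrite sym.
have zw := adj_neq irr ezw. have zy := adj_neq irr ezy. have nw := adj_neq irr enw.
have ny := adj_neq irr eny. have wy := adj_neq irr ewy.
have zn : z != n by rewrite eq_sym.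
exists [set z; w; n; y]; apply/andP; split.
  apply: (mk_diamond sym); last exact: nzn.
  - by rewrite zw zn zy (eq_sym w n) nw wy ny.
  - by rewrite ezw ezy enw eny ewy.
by apply/subsetP => v; rewrite !inE => /orP [/orP [] | ] ->; rewrite ?orbT.
Qed.

End H.

Section I.
Variables (T : finType) (e : rel T).
Hypotheses (sym : symmetric e) (irr : irreflexive e) (cub : cubic e)
  (con : connected_graph e) (cf : claw_free e) (nK4 : ~ is_K4 e).

Lemma tri_merge T1 T2 w : induces_triangle e T1 -> induces_triangle e T2 -> T1 != T2 ->
  w \in T1 -> w \in T2 -> exists D, induces_diamond e D && (T1 \subset D).
Proof.
move=> H1 H2 neq w1 w2.
have [y [z [E1 wy yz wz /and3P [ewy eyz ewz]]]] := tri_rep_at sym H1 w1.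
have [q [r [E2 wq qr wr /and3P [ewq eqr ewr]]]] := tri_rep_at sym H2 w2.
have [n /and3P [ewn ny nz]] := third_nbr cub w y z.
have yn : y != n by rewrite eq_sym.
have zn : z != n by rewrite eq_sym.
have ezy : e z y by rewrite sym.
have conv : [set w; y; z] = [set w; z; y] by seteq.
have Hq := nb3 cub ewy ewz ewn yz zn yn ewq.
have Hr := nb3 cub ewy ewz ewn yz zn yn ewr.
move: neq; rewrite E1 E2 => neq.
case/or3P: Hq => /eqP Eq; case/or3P: Hr => /eqP Er; subst q r.
- by rewrite eqxx in qr.
- by rewrite eqxx in neq.
- by have := dia_ext sym irr cub con nK4 ewy eyz ewz ewn eqr nz.
- by rewrite conv eqxx in neq.
- by rewrite eqxx in qr.
- by rewrite conv; have := dia_ext sym irr cub con nK4 ewz ezy ewy ewn eqr ny.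
- have eyn : e y n by rewrite sym.
  by have := dia_ext sym irr cub con nK4 ewy eyz ewz ewn eyn nz.
- have ezn : e z n by rewrite sym.
  by rewrite conv; have := dia_ext sym irr cub con nK4 ewz ezy ewy ewn ezn ny.
- by rewrite eqxx in qr.
Qed.

Lemma unit_part_ex : exists P, unit_partition e P.
Proof.
pose P := [set A | induces_diamond e A ||
  (induces_triangle e A && [forall D, induces_diamond e D ==> ~~ (A \subset D)])].
exists P; apply/andP; split; last first.
  apply/forall_inP => A; rewrite inE => /orP [-> | /andP [-> _]]; by rewrite ?orbT.
apply/and3P; split.
- apply/eqP/setP => v; rewrite inE; apply/in_cover.
  have [A /andP [HA vA]] := in_tri sym irr cub cf v.
  case: (boolP [exists D, induces_diamond e D && (A \subset D)]) => [/existsP [D /andP [HD AD]] | /existsPn H].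
    by exists D; [rewrite inE HD | exact: (subsetP AD)].
  exists A => //; rewrite inE HA /=; apply/orP; right; apply/forallP => D; apply/implyP => HD.
  by move: (H D); rewrite HD.
- apply/trivIsetP => A B; rewrite !inE => HA HB AB.
  case: (boolP [disjoint A & B]) => // nd; exfalso.
  have [w] : exists w, w \in A :&: B by apply/set0Pn; rewrite setI_eq0.
  rewrite inE => /andP [wA wB].
  case/orP: HA => [DA | /andP [TA FA]]; case/orP: HB => [DB | /andP [TB FB]].
  + by move: AB; rewrite (dia_eq sym irr cub DA DB wA wB) eqxx.
  + have := tri_in_dia sym irr cub TB DA wB wA.
    by move/forallP: FB => /(_ A); rewrite DA /= => /negbTE ->.
  + have := tri_in_dia sym irr cub TA DB wA wB.
    by move/forallP: FA => /(_ B); rewrite DB /= => /negbTE ->.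
  + have [D /andP [HD AD]] := tri_merge TA TB AB wA wB.
    by move/forallP: FA => /(_ D); rewrite HD AD.
- by rewrite inE /induces_diamond /induces_triangle cards0.
Qed.

End I.

Section J.
Variables (T : finType) (e : rel T).
Hypotheses (sym : symmetric e) (irr : irreflexive e) (cub : cubic e).

Lemma K4_s22 : is_K4 e -> sigma e 2 2 <= 2.
Proof.
case=> c4 adj.
have [x [y [z [w [/and5P [xy xz xw yz /andP [yw zw]] E]]]]] := set_enum4 (etrans (cardsT T) c4).
have R1 : R e [set x; y] [set z].
  apply: (R_one cub (p := x) (q := y) (h := y)); rewrite ?inE ?eqxx ?orbT ?adj //.
  by rewrite eq_sym. by rewrite eq_sym.
have R2 : R e ([set x; y] :|: [set z]) [set w].
  apply: (R_one cub (p := x) (q := y) (h := y)); rewrite ?inE ?eqxx ?orbT ?adj //.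
  by rewrite eq_sym. by rewrite eq_sym.
have : spreading_set e 2 2 [set x; y].
  apply: R_final; apply: R_close (R_cat R1 R2) _; rewrite E; subs.
move/(sigma_le); rewrite cards2; case: (x != y); lia.
Qed.

Lemma s23_pos : 0 < #|T| -> 0 < sigma e 2 3.
Proof.
move=> /card_gt0P [v _]; have [S sp cS] := sigma_ex e 2 3.
rewrite -cS lt0n; apply/negP => /eqP /cards0_eq S0; subst S.
pose I := fun B : {set T} => B == set0.
have inv : forall B B', I B -> spread_step e 2 3 B B' -> I B'.
  move=> B B' /eqP -> /existsP [u /and4P [_ two _ _]].
  by move: two; rewrite setI0 cards0.
have := connect_inv inv (eqxx _) sp; rewrite /I => /eqP E.
have : v \in [set: T] by rewrite inE.
by rewrite E inE.
Qed.

End J.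

Unset Implicit Arguments.

Theorem corollary4p8 (T : finType) (e : rel T) :
  simple_graph e -> connected_graph e -> claw_free e -> cubic e ->
  (sigma e 2 3 <= sigma e 2 2 <= (sigma e 2 3).+1) /\
  (~ is_K4 e -> num_units e <= sigma e 2 2 <= (num_units e).+1).
Proof.
move=> [sym irr] con cf cub.
have le1 : sigma e 2 3 <= sigma e 2 2.
  have [S sp <-] := sigma_ex e 2 2; apply: sigma_le; exact: spread22_23.
have part2 : ~ is_K4 e -> (num_units e <= sigma e 2 2 <= (num_units e).+1) /\
    sigma e 2 2 <= (sigma e 2 3).+1.
  move=> nK4; have [P0 HP0] := unit_part_ex sym irr cub con cf nK4.
  rewrite /num_units; case: pickP => [P HP | H]; last by move: (H P0); rewrite HP0.
  have [S22 sp22 c22] := sigma_ex e 2 2.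
  have [S23 sp23 c23] := sigma_ex e 2 3.
  have lb22 := lb sym cub HP (spread22_23 sp22).
  have lb23 := lb sym cub HP sp23.
  have [S sp cS] := ub sym irr cub con HP.
  have ub22 := leq_trans (sigma_le sp) cS.
  rewrite -c22 lb22 /=; rewrite c22 ub22; split => //.
  by apply: leq_trans ub22 _; rewrite ltnS -c23.
split; last by move=> nK4; case: (part2 nK4).
rewrite le1 /=.
case: (boolP ((#|T| == 4) && [forall x, forall y, (x != y) ==> e x y])) => [/andP [/eqP c4 /forallP H] | nK].
  have K4 : is_K4 e by split => // x y xy; move/forallP: (H x) => /(_ y) /implyP; apply.
  apply: leq_trans (K4_s22 cub K4) _.
  by rewrite ltnS; apply: s23_pos; rewrite c4.
apply: (part2 _).2 => -[c4 H]; move: nK; rewrite c4 eqxx /=.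
apply/negP/negPn/forallP => x; apply/forallP => y; apply/implyP; exact: H.
Qed.
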